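(* Let $p,n$ be positive integers with $c=\gcd(p,n)$ prime, let $d=n/c$ and $y\in\mathbb{Z}_n$. Let $G\cong K_{c-1,d}$ and $H\cong K_{1,n}$ with disjoint vertex sets. Then $\mathcal{Q}_{(\mathbb{Z}_n,y,y)}(\widetilde{\mathcal{T}(p,2)})\cong G\,\overrightarrow{\triangledown_d}\,H$. Explicitly, the trivial coloring carries $n$ loops and has no outgoing arcs to other vertices, and for each nontrivial coloring $\alpha$ and each coloring $\beta$ (trivial or not) there are exactly $d$ arcs from $\alpha$ to $\beta$.
   Context: $\mathbb{Z}_n$ is the dihedral quandle ($x\triangleright y=2y-x$ mod $n$) and $(\mathbb{Z}_n,y,y)$ the $2$-pointed quandle with both basepoints $y$. $P(\widetilde{\mathcal{T}(p,2)})=(Q,x_1,x_{p+1})$ with $Q=\langle x_1,\dots,x_{p+1}\mid x_p=x_2\triangleright x_{p+1},\ x_i=x_{i+2}\triangleright x_{i+1}\ (1\le i\le p-1)\rangle$, the fundamental pointed quandle of the $1$-linkoid of $(p,2)$-torus type. For a pointed quandle $\mathcal{X}$, the full pointed quandle coloring quiver $\mathcal{Q}_{\mathcal{X}}(L)$ is the directed multigraph with vertex set $\hom(P(L),\mathcal{X})$ (basepoint-preserving homomorphisms) and $|\{\varphi\in\operatorname{End}(\mathcal{X}):\varphi\circ\alpha=\beta\}|$ arcs from $\alpha$ to $\beta$, with $\operatorname{End}(\mathcal{X})$ the pointed endomorphisms. A directed multigraph is a pair $(V,w)$, $w:V\times V\to\mathbb{Z}_{\ge0}$ counting arcs. $K_{m,k}$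 is the directed multigraph on $\{1,\dots,m\}$ with $w(u,v)=k$ for all $u,v$ (loops included). For directed multigraphs $G=(V(G),w_G)$, $H=(V(H),w_H)$ with disjoint vertex sets, the $k$-directed join $G\,\overrightarrow{\triangledown_k}\,H$ has vertex set $V(G)\cup V(H)$ and $w(u,v)=w_G(u,v)$ if $u,v\in V(G)$, $w_H(u,v)$ if $u,v\in V(H)$, $k$ if $u\in V(G),v\in V(H)$, and $0$ if $u\in V(H),v\in V(G)$. *)

(* Defs.v *)
From HB Require Import structures.
From mathcomp Require Import all_boot all_order all_algebra.
Set Implicit Arguments. Unset Strict Implicit. Unset Printing Implicit Defensive.
Import GRing.Theory.
Local Open Scope ring_scope.

Definition dih (n : nat) (x y : 'Z_n) : 'Z_n := y *+ 2 - x.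

(* Colorings = basepoint-preserving homomorphisms P(T~(p,2)) -> (Z_n, y, y).
   By the universal property of the presented quandle Q, such a homomorphism
   is the same as an assignment of the generators x_1..x_{p+1} satisfying the
   defining relations.  Generator x_k is stored at index k-1 of 'I_(p+1). *)
Definition gen (n p : nat) (a : {ffun 'I_p.+1 -> 'Z_n}) (k : nat) : 'Z_n :=
  a (inord k.-1).

Definition is_coloring (n p : nat) (y : 'Z_n) (a : {ffun 'I_p.+1 -> 'Z_n}) : bool :=
  [&& gen a p == dih (gen a 2) (gen a p.+1),
      [forall i : 'I_p.+1,
         ((1 <= i)%N && (i <= p - 1)%N) ==>
           (gen a i == dih (gen a (i + 2)%N) (gen a (i + 1)%N))],
      gen a 1 == y & gen a p.+1 == y].

Definition coloring (n p : nat) (y : 'Z_n) : finType :=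
  {a : {ffun 'I_p.+1 -> 'Z_n} | is_coloring y a}.

Definition is_pend (n : nat) (y : 'Z_n) (f : {ffun 'Z_n -> 'Z_n}) : bool :=
  [forall a, forall b, f (dih a b) == dih (f a) (f b)] && (f y == y).

Definition quiver_w (n p : nat) (y : 'Z_n) (al be : coloring p y) : nat :=
  #|[set f : {ffun 'Z_n -> 'Z_n} |
      is_pend y f && ([ffun k => f (val al k)] == val be)]|.

Record dmg := DMG { dmg_V : finType; dmg_w : dmg_V -> dmg_V -> nat }.

Definition dmg_iso (G H : dmg) : Prop :=
  exists f : dmg_V G -> dmg_V H,
    bijective f /\ forall u v, @dmg_w H (f u) (f v) = @dmg_w G u v.

Definition quiver (n p : nat) (y : 'Z_n) : dmg := @DMG (coloring p y) (@quiver_w n p y).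

(* K_{m,k}: m vertices, k arcs between every ordered pair (loops included). *)
Definition Kmk (m k : nat) : dmg := @DMG 'I_m (fun _ _ => k).

Definition djoin_w (k : nat) (G H : dmg) (u v : (dmg_V G + dmg_V H)%type) : nat :=
  match u, v with
  | inl u', inl v' => @dmg_w G u' v'
  | inr u', inr v' => @dmg_w H u' v'
  | inl _, inr _ => k
  | inr _, inl _ => 0%N
  end.

Definition djoin (k : nat) (G H : dmg) : dmg :=
  @DMG (dmg_V G + dmg_V H)%type (@djoin_w k G H).

(* Main.v *)
Require Import Defs.
From mathcomp Require Import all_boot all_order all_algebra.
From mathcomp Require Import zify ring.
Set Implicit Arguments. Unset Strict Implicit. Unset Printing Implicit Defensive.
Import GRing.Theory.

Lemma card_res N a b r : (0 < a)%N -> N = (a * b)%N -> (r < a)%N ->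
  #|[set u : 'I_N | u %% a == r]| = b.
Proof.
move=> a0 Nab ra.
have gP (k : 'I_b) : (r + a * k < N)%N.
  by rewrite Nab; have := ltn_ord k; nia.
pose g (k : 'I_b) : 'I_N := Ordinal (gP k).
have ginj : injective g.
  move=> k1 k2 /(congr1 val) /= H; apply: val_inj => /=; nia.
have -> : [set u : 'I_N | u %% a == r] = g @: setT.
  apply/setP => u; rewrite inE; apply/eqP/imsetP.
  - move=> ur.
    have ub : (u %/ a < b)%N by rewrite ltn_divLR // mulnC -Nab.
    exists (Ordinal ub) => //; apply: val_inj => /=.
    by rewrite {1}(divn_eq u a) ur addnC mulnC.
  - case=> k _ -> /=. by rewrite addnC mulnC modnMDl modn_small.
by rewrite card_imset // cardsT card_ord.
Qed.

Lemma inv_mod c j : prime c -> (0 < j < c)%N -> exists j', ((j' * j) %% c = 1)%N.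
Proof.
move=> pc /andP [j0 jc].
have c1 := prime_gt1 pc.
case: c pc c1 jc => [|[|c']] // pc _ jc.
pose x : 'I_c'.+2 := Ordinal jc.
have cop : coprime c'.+2 x.
  rewrite prime_coprime //=; apply/negP => /(dvdn_leq j0); rewrite leqNgt jc.
  by [].
have := Zp_mulVz cop => /(congr1 val) /= E.
by exists (Zp_inv x); rewrite E.
Qed.

Lemma cnt_nat N c d j i : prime c -> (0 < d)%N -> N = (c * d)%N -> (0 < j < c)%N -> (i < c)%N ->
  #|[set u : 'I_N | ((u * (j*d)) %% N == i*d)%N]| = d.
Proof.
move=> pc d0 eN jc ic.
have c0 := prime_gt0 pc.
have [j' Ej] := inv_mod pc jc.
transitivity #|[set u : 'I_N | u %% c == (i * j') %% c]|; last first.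
  by apply: card_res => //; rewrite ltn_mod.
apply: eq_card => u; rewrite !inE.
have -> : forall x, ((x * (j*d)) %% N = ((x*j) %% c) * d)%N by move=> x; rewrite eN mulnA muln_modl.
rewrite eqn_pmul2r //.
apply/eqP/eqP => H.
- have -> : (u %% c = (u * (j' * j)) %% c)%N.
    by rewrite -modnMmr Ej muln1.
  by rewrite mulnA [(u * j' * j)%N]mulnC mulnA -modnMml [(j * u)%N]mulnC H.
- rewrite -modnMml H modnMml -mulnA -modnMmr Ej muln1 modn_small //.
Qed.

Lemma gcd_split p N : (0 < N)%N ->
  let c := gcdn p N in
  [/\ (0 < c)%N, N = (c * (N %/ c))%N, p = (c * (p %/ c))%N & coprime (N %/ c) (p %/ c)].
Proof.
move=> N0 c.
have c0 : (0 < c)%N by rewrite gcdn_gt0 N0 orbT.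
have eN : N = (c * (N %/ c))%N by rewrite mulnC divnK // dvdn_gcdr.
have ep : p = (c * (p %/ c))%N by rewrite mulnC divnK // dvdn_gcdl.
split=> //.
have : c = (c * gcdn (N %/ c) (p %/ c))%N.
  by rewrite muln_gcdr -eN -ep gcdnC.
rewrite /coprime => E; apply/eqP.
by apply/eqP; rewrite -(eqn_pmul2l c0) muln1 -E.
Qed.

Lemma ann_nat p N t : (0 < N)%N ->
  (N %| p * t)%N = (N %/ gcdn p N %| t)%N.
Proof.
move=> N0; have [c0 eN ep cop] := gcd_split p N0.
set c := gcdn p N in c0 eN ep cop *.
have -> : (N %| p * t)%N = (c * (N %/ c) %| c * ((p %/ c) * t))%N by rewrite mulnA -eN -ep.
by rewrite dvdn_pmul2l // Gauss_dvdr.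
Qed.

Local Open Scope ring_scope.
Lemma valZM m (x z : 'Z_m.+2) : nat_of_ord (x * z) = ((x * z) %% m.+2)%N.
Proof. by []. Qed.

Lemma Zmul0 m p (t : 'Z_m.+2) : (p%:R * t == 0) = (m.+2 %| p * t)%N.
Proof.
rewrite -val_eqE /= (val_Zp_nat (p := m.+2)) // modnMml.
by rewrite /dvdn.
Qed.


Lemma shape_aux p m (y : 'Z_m.+2) (a : {ffun 'I_p.+1 -> 'Z_m.+2}) :
  (0 < p)%N -> is_coloring y a ->
  forall i, (i <= p)%N -> a (inord i) = y + i%:R * (a (inord 1) - y).
Proof.
move=> p0 /and4P [_ /forallP H2 /eqP H3 _].
rewrite /gen /= in H3.
suff: forall i, (i <= p)%N -> a (inord i) = y + i%:R * (a (inord 1) - y) /\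
   ((i.+1 <= p)%N -> a (inord i.+1) = y + i.+1%:R * (a (inord 1) - y)).
  by move=> H i ip; case: (H i ip).
elim=> [|i IH] ip.
  split; first by rewrite H3; ring.
  by move=> _; ring.
have [IH1 IH2] := IH (ltnW ip).
split; first exact: IH2.
move=> i2p.
have := H2 (inord i.+1).
rewrite inordK; last by lia.
have -> : ((1 <= i.+1)%N && (i.+1 <= p - 1)%N) by apply/andP; split; lia.
move=> /= /eqP.
rewrite /gen /dih /= !addn2 !addn1 /=.
rewrite IH1 ?IH2; try lia.
move=> E.
have -> : a (inord i.+2) = (y + (i.+1)%:R * (a (inord 1) - y)) *+ 2 - (y + i%:R * (a (inord 1) - y)).
  rewrite E; ring.
rewrite -[(i.+2)%:R]natr1 -[(i.+1)%:R]natr1 mulr2n; ring.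
Qed.

Definition mkcol p m (y : 'Z_m.+2) (t : 'Z_m.+2) : {ffun 'I_p.+1 -> 'Z_m.+2} :=
  [ffun k : 'I_p.+1 => y + (k : nat)%:R * t].

Lemma mkcol_ok p m (y t : 'Z_m.+2) : (0 < p)%N -> p%:R * t = 0 -> is_coloring y (mkcol p y t).
Proof.
case: p => [//|q] _ pt.
apply/and4P; split.
- rewrite /gen /dih /mkcol !ffunE /= !inordK //; try lia.
  apply/eqP. rewrite -[(q.+1)%:R]natr1 in pt.
  rewrite -[(q.+1)%:R]natr1 mulr2n.
  have -> : y + q%:R * t = y + q%:R * t + (q%:R + 1) * t by rewrite pt addr0.
  ring.
- apply/forallP => i; apply/implyP => /andP [i1 i2].
  rewrite /gen /dih /mkcol !ffunE /= !inordK; try lia.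
  apply/eqP. have -> : (i + 2).-1 = ((i + 1).-1).+1 by lia.
  have -> : (i + 1).-1 = ((i.-1).+1) by lia.
  rewrite -![(_.+1)%:R]natr1 mulr2n; ring.
- by rewrite /gen /mkcol !ffunE /= inordK // mul0r addr0.
- by rewrite /gen /mkcol !ffunE /= inordK // pt addr0.
Qed.

Definition aff m (y u : 'Z_m.+2) : {ffun 'Z_m.+2 -> 'Z_m.+2} := [ffun x => u * (x - y) + y].

Lemma aff_pend m (y u : 'Z_m.+2) : is_pend y (aff y u).
Proof.
apply/andP; split; last by rewrite /aff ffunE subrr mulr0 add0r.
apply/forallP => a; apply/forallP => b; apply/eqP.
rewrite /aff /dih !ffunE !mulr2n; ring.
Qed.

Lemma pend_aff m (y : 'Z_m.+2) f : is_pend y f -> f = aff y (f (1 + y) - y).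
Proof.
case/andP => /forallP H /eqP fy.
set u := f (1 + y) - y.
suff K : forall k, f (k%:R + y) = k%:R * u + y /\ f (k.+1%:R + y) = k.+1%:R * u + y.
  apply/ffunP => x; rewrite /aff ffunE.
  have -> : x = (nat_of_ord (x - y)%R)%:R + y by rewrite natr_Zp subrK.
  by rewrite (K _).1 natr_Zp addrK mulrC.
elim=> [|k [IH1 IH2]].
  rewrite /= mulr0n mulr1n !add0r fy mul0r mul1r /u subrK add0r.
  by split.
split; first exact: IH2.
have /forallP/(_ (k.+1%:R + y))/eqP := H (k%:R + y).
have -> : dih (k%:R + y) (k.+1%:R + y) = k.+2%:R + y.
  by rewrite /dih -![(_.+1)%:R]natr1 mulr2n; ring.
move=> ->; rewrite /dih IH1 IH2 -![(_.+1)%:R]natr1 mulr2n; ring.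
Qed.

Lemma aff_inj m (y : 'Z_m.+2) : injective (aff y).
Proof.
move=> u v /ffunP /(_ (1 + y)); rewrite !ffunE addrK !mulr1.
by move/addIr.
Qed.


Lemma cntZ p m (t s : 'Z_m.+2) : prime (gcdn p m.+2) -> p%:R * t = 0 -> p%:R * s = 0 -> t != 0 ->
  #|[set u : 'Z_m.+2 | u * t == s]| = (m.+2 %/ gcdn p m.+2)%N.
Proof.
move=> pc /eqP ht /eqP hs tn0.
have N0 : (0 < m.+2)%N by [].
have [c0 eN ep cop] := gcd_split p N0.
move: ht hs; rewrite !Zmul0 !ann_nat //.
set c := gcdn p m.+2 in pc c0 eN ep cop *.
set d := (m.+2 %/ c)%N in eN cop *.
move=> dt ds.
have d0 : (0 < d)%N by move: eN; case: (d) => //; rewrite muln0.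
have tj : nat_of_ord t = (t %/ d * d)%N by rewrite divnK.
have si : nat_of_ord s = (s %/ d * d)%N by rewrite divnK.
have jc : (0 < t %/ d < c)%N.
  apply/andP; split.
    rewrite divn_gt0 //; apply: dvdn_leq => //.
    by rewrite lt0n; move: tn0; apply: contra => /eqP E; apply/eqP/val_inj.
  by rewrite ltn_divLR // -eN.
have ic : (s %/ d < c)%N by rewrite ltn_divLR // -eN.
rewrite -(cnt_nat pc d0 eN jc ic).
apply: eq_card => u; rewrite !inE -val_eqE /= -tj -si.
by [].
Qed.

Lemma annZ p m : #|[set t : 'Z_m.+2 | p%:R * t == 0]| = gcdn p m.+2.
Proof.
have N0 : (0 < m.+2)%N by [].
have [c0 eN ep cop] := gcd_split p N0.
transitivity #|[set t : 'I_m.+2 | t %% (m.+2 %/ gcdn p m.+2) == 0]%N|.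
  by apply: eq_card => t; rewrite !inE Zmul0 ann_nat.
apply: card_res => //.
- by move: eN; case: (m.+2 %/ gcdn p m.+2)%N => //; rewrite muln0.
- by rewrite mulnC.
- by move: eN; case: (m.+2 %/ gcdn p m.+2)%N => //; rewrite muln0.
Qed.

Definition tt p m (y : 'Z_m.+2) (a : coloring p y) : 'Z_m.+2 := val a (inord 1) - y.

Lemma col_shape p m (y : 'Z_m.+2) (a : coloring p y) (i : 'I_p.+1) :
  (0 < p)%N -> val a i = y + (i : nat)%:R * tt a.
Proof.
move=> p0; rewrite -[i in val a i]inord_val.
exact: (shape_aux p0 (valP a) (ltn_ord i : (i <= p)%N)).
Qed.

Lemma col_ann p m (y : 'Z_m.+2) (a : coloring p y) : (0 < p)%N -> p%:R * tt a = 0.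
Proof.
move=> p0; have := valP a => /and4P [_ _ _ /eqP H4].
move: H4; rewrite /gen /= (shape_aux p0 (valP a) (leqnn p)).
move/(congr1 (fun z => z - y)) => /=.
by rewrite subrr addrC addKr.
Qed.

Lemma tt_inj p m (y : 'Z_m.+2) : (0 < p)%N -> injective (@tt p m y).
Proof.
move=> p0 a b E; apply: val_inj; apply/ffunP => i.
by rewrite !col_shape // E.
Qed.

Lemma tt_surj p m (y t : 'Z_m.+2) : (0 < p)%N -> p%:R * t = 0 -> exists a : coloring p y, tt a = t.
Proof.
move=> p0 pt.
exists (Sub (mkcol p y t) (mkcol_ok y p0 pt)).
by rewrite /tt /= /mkcol ffunE inordK //= mul1r addrC addKr.
Qed.

Lemma triv_iff p m (y : 'Z_m.+2) (a : coloring p y) : (0 < p)%N ->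
  [forall k, val a k == y] = (tt a == 0).
Proof.
move=> p0; apply/forallP/eqP => [H|H k].
  by rewrite /tt (eqP (H _)) subrr.
by rewrite col_shape // H mulr0 addr0.
Qed.

Lemma w_eq p m (y : 'Z_m.+2) (al be : coloring p y) : (0 < p)%N ->
  quiver_w al be = #|[set u : 'Z_m.+2 | u * tt al == tt be]|.
Proof.
move=> p0; rewrite /quiver_w.
have -> : [set f : {ffun 'Z_m.+2 -> 'Z_m.+2} | is_pend y f && ([ffun k => f (val al k)] == val be)]
   = aff y @: [set u : 'Z_m.+2 | u * tt al == tt be].
  apply/setP => f; rewrite inE; apply/andP/imsetP.
  - case=> pf /eqP E; exists (f (1 + y) - y); last exact: pend_aff.
    rewrite inE; move/ffunP: E => /(_ (inord 1)); rewrite ffunE (pend_aff pf) ffunE.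
    by rewrite /tt => <-; rewrite !ffunE !addrK mulr1.
  - case=> u; rewrite inE => /eqP E ->; split; first exact: aff_pend.
    apply/eqP/ffunP => k; rewrite !ffunE !col_shape // -E; ring.
by rewrite card_imset //; exact: aff_inj.
Qed.

Lemma bij_exists (A B : finType) (a0 : A) (b0 : B) : #|A| = #|B| ->
  exists f : A -> B, bijective f /\ f a0 = b0.
Proof.
move=> E.
pose h (x : A) : B := enum_val (cast_ord E (enum_rank x)).
pose h' (z : B) : A := enum_val (cast_ord (esym E) (enum_rank z)).
have hK : cancel h h' by move=> x; rewrite /h /h' enum_valK cast_ordK enum_rankK.
have h'K : cancel h' h by move=> z; rewrite /h /h' enum_valK cast_ordKV enum_rankK.
pose s (z : B) := if z == h a0 then b0 else if z == b0 then h a0 else z.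
have sK : cancel s s.
  move=> z; rewrite /s; case: (eqVneq z (h a0)) => [->|n1]; first by rewrite eqxx; case: eqP.
  case: (eqVneq z b0) => [->|n2]; first by rewrite eqxx.
  by rewrite (negbTE n1) (negbTE n2).
exists (fun x => s (h x)); split.
  exists (fun z => h' (s z)) => x /=; first by rewrite sK hK.
  by rewrite h'K sK.
by rewrite /s eqxx.
Qed.



Lemma card_col p m (y : 'Z_m.+2) : (0 < p)%N -> #|coloring p y| = gcdn p m.+2.
Proof.
move=> p0; rewrite -(annZ p m) -[LHS]cardsT -(card_imset _ (@tt_inj p m y p0)).
apply: eq_card => t; rewrite inE; apply/imsetP/eqP.
  by case=> a _ ->; rewrite col_ann.
by move=> pt; have [a ta] := tt_surj y p0 pt; exists a.
Qed.

Theorem theorem6p15 (p n : nat) (y : 'Z_n) :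
  (0 < p)%N -> (0 < n)%N -> prime (gcdn p n) ->
  let c := gcdn p n in
  let d := (n %/ c)%N in
  dmg_iso (quiver p y) (djoin d (Kmk c.-1 d) (Kmk 1 n)) /\
  (forall al be : coloring p y,
     if [forall k, val al k == y]
     then quiver_w al be = (if al == be then n else 0%N)
     else quiver_w al be = d).
Proof.
move: y; case: n => [|[|m]] y p0 n0 pc c d //.
  by rewrite gcdn1 in pc.
have H2 : forall al be : coloring p y, quiver_w al be =
    if tt al == 0 then (if al == be then m.+2 else 0%N) else d.
  move=> al be; rewrite w_eq //.
  case: eqP => [t0|/eqP t0]; last first.
    by apply: cntZ => //; apply: col_ann.
  have -> : (al == be) = (tt be == 0).
    by rewrite -t0 (inj_eq (@tt_inj p m y p0)) eq_sym.
  case: eqP => [b0|/eqP b0].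
    by rewrite -[RHS](card_ord m.+2); apply: eq_card => u; rewrite !inE t0 b0 mulr0 eqxx.
  by rewrite -(cards0 'Z_m.+2); apply: eq_card => u; rewrite !inE t0 mulr0 eq_sym (negbTE b0).
split; last first.
  by move=> al be; rewrite triv_iff // H2; case: (tt al == 0).
have [a0 ta0] := tt_surj y p0 (mulr0 p%:R).
have c0 : (0 < c)%N by rewrite prime_gt0.
have Ecard : #|coloring p y| = #|{: 'I_c.-1 + 'I_1}|.
  by rewrite card_col // card_sum !card_ord addn1 prednK.
have [f [fbij fa0]] := bij_exists a0 (inr (ord0 : 'I_0.+1)) Ecard.
exists f; split => // u v.
have fr : forall x, (exists z, f x = inr z) <-> (tt x == 0).
  move=> x; split.
    case=> z fz; have -> : x = a0.
      by apply: (bij_inj fbij); rewrite fz fa0 (ord1 z).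
    by rewrite ta0.
  move=> /eqP tx; have -> : x = a0 by apply: (@tt_inj p m y p0); rewrite tx ta0.
  by exists ord0.
rewrite /= H2.
case Eu: (f u) => [u'|u']; case Ev: (f v) => [v'|v'] /=.
- have : tt u != 0 by apply/negP => /fr [z]; rewrite Eu.
  by move/negbTE => ->.
- have : tt u != 0 by apply/negP => /fr [z]; rewrite Eu.
  by move/negbTE => ->.
- have /fr -> : exists z, f u = inr z by exists u'.
  case: eqP => // E; move: Ev; rewrite -E Eu //.
- have /fr -> : exists z, f u = inr z by exists u'.
  have /fr /eqP tv : exists z, f v = inr z by exists v'.
  have /fr /eqP tu : exists z, f u = inr z by exists u'.
  by rewrite (@tt_inj p m y p0 _ _ (etrans tu (esym tv))) eqxx.
Qed.
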